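(* For every finite set $S$ of states containing the distinguished blank state $\text{␣}$, there exists a 4-CAS $\mathcal{C}=(L,A,S,N_4,\{f_c\}_{c\in L\setminus A})$ with state set $S$ and four distinct cells $a_1,a_2\in A$, $b_1,b_2\in L$, together with delays $\delta_1,\delta_2\in\mathbb{Z}$, such that $\mathcal{C}$ is a channel from $a_1$ to $b_1$ with delay $\delta_1$ and a channel from $a_2$ to $b_2$ with delay $\delta_2$, and $\mathcal{C}$ crosses these two channels.
   Context: A cellular automaton with sources (CAS) is a tuple $\mathcal{C}=(L,A,S,N,\{f_c\}_{c\in L\setminus A})$ where: $L$ is a subset of a lattice (here always $\mathbb{Z}^2$), whose elements are cells; $A\subseteq L$ is the set of sources; $S$ is a finite set of states containing a distinguished blank state $\text{␣}$; $N=(n_1,\dots,n_\nu)$ is a fixed tuple of distinct neighbourhood offsets containing $0$; and for each non-source $c$, $f_c:S^\nu\times\mathbb{N}\to S$ is a transition function that does not depend on its $i$-th argument whenever $c+n_i\notin L$. A message is a function $m:\{0,1,\dots,r\}\to S\setminus\{\text{␣}\}$ with $r\in\mathbb{N}$ its length $\lambda(m)$. An input is a map $\iota$ assigning a message to each source. Configurations $C_{t,\iota}:L\to S$ ($t\in\mathbb{N}$) are defined by: $C_{0,\iota}(c)=\iota(c)(0)$ for $c\in A$ and $C_{0,\iota}(c)=\text{␣}$ for $c\notin A$ (blank-initialization, assumed throughout); and $C_{t+1,\iota}(c)=\iota(c)(t+1)$ if $c\in A$ and $t<\lambda(\iota(c))$, $C_{t+1,\iota}(c)=\text{␣}$ if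 $c\in A$ and $t\ge\lambda(\iota(c))$, and $C_{t+1,\iota}(c)=f_c(C_{t,\iota}(c+n_1),\dots,C_{t,\iota}(c+n_\nu),t+1)$ otherwise. A 4-CAS is a CAS with $L\subseteq\mathbb{Z}^2$ and $N=N_4:=((-1,0),(0,-1),(1,0),(0,1),(0,0))$. Channel: for $\delta\in\mathbb{Z}$ and cells $x,y$, $\mathcal{C}$ is a channel from $x$ to $y$ with delay $\delta$ if for all $t\in\mathbb{N}$ and all inputs $\iota$, $C_{t,\iota}(y)=C_{t-\delta,\iota}(x)$ when $t\ge\delta$ and $C_{t,\iota}(y)=\text{␣}$ when $t<\delta$. Connectedness: $L$ is connected if any two cells of $L$ are joined by a finite sequence of cells of $L$, each consecutive pair differing by an offset in $N$ (for 4-CAS: orthogonally adjacent). External boundary: viewing each cell of $\mathbb{Z}^2$ as a unit square in $\mathbb{R}^2$, a finite connected $L$ has an external boundary, a cyclic sequence $(e_0,\dots,e_{k-1})$ of unit edges such that consecutive edges $e_i,e_{i+1 \bmod k}$ meet at vertices $v_i$, the $v_i$ are distinct (a simple closed curve), each $e_i$ separates a cell $\bar e_i\in L$ from a cell not in $L$, and $L$ lies in the bounded region enclosed; it is unique up to reversal and cyclic shift. Crossing: a CAS that is a channel from $a_1$ to $b_1$ and from $a_2$ to $b_2$, for four distinct cells $a_1,a_2\in A$, $b_1,b_2\in L$, crosses these channels if (i) $L$ is connected; (ii) whenever $\bar e_i=\bar e_j\in\{a_1,a_2,b_1,b_2\}$ with $i\le j$, either $|\{\bar e_l: i\le l\le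 j\}|=1$ or $|\{\bar e_l: 0\le l\le i \text{ or } j\le l\le k-1\}|=1$; and (iii) there exist indices $\alpha<\beta<\gamma<\delta$ of boundary edges such that $(\bar e_\alpha,\bar e_\beta,\bar e_\gamma,\bar e_\delta)$ is a cyclic permutation of $(a_1,a_2,b_1,b_2)$ or of $(b_2,b_1,a_2,a_1)$. *)

(* Defs.v *)
From HB Require Import structures.
From mathcomp Require Import all_boot all_order all_algebra.
Set Implicit Arguments. Unset Strict Implicit. Unset Printing Implicit Defensive.
Import Order.TTheory GRing.Theory Num.Theory.

(* Cells of Z^2 (also used for lattice points / vertices of unit squares:
   cell (i,j) is the unit square [i,i+1] x [j,j+1]). *)
Definition cell := (int * int)%type.

Definition cadd (c d : cell) : cell := ((c.1 + d.1)%R, (c.2 + d.2)%R).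

Definition N4 : seq cell :=
  [:: ((-1)%R, 0%R); (0%R, (-1)%R); (1%R, 0%R); (0%R, 1%R); (0%R, 0%R)].

Definition n4 (i : 'I_5) : cell := nth (0%R, 0%R) N4 i.

(* L is a finite set of cells (given as a
   list), A the sources (A ⊆ L), f c the transition function of cell c
   (only relevant for c ∈ L \ A); its arguments are the states of the
   neighbours c + n_i (i : 'I_5, in the order of N_4) and the time. *)
Record CAS4 (S : finType) := {
  cas_L : seq cell;
  cas_A : seq cell;
  cas_A_sub : {subset cas_A <= cas_L};
  cas_f : cell -> {ffun 'I_5 -> S} -> nat -> S;
  cas_f_local : forall c, c \in cas_L -> c \notin cas_A ->
    forall i : 'I_5, cadd c (n4 i) \notin cas_L ->
    forall x y : {ffun 'I_5 -> S}, (forall j, j != i -> x j = y j) ->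
    forall t, cas_f c x t = cas_f c y t
}.

(* A message m : {0..r} -> S \ {blank} is the list [m 0; ...; m r];
   its length λ(m) is r = size m - 1. *)
Definition is_message (S : finType) (blank : S) (m : seq S) : bool :=
  (0 < size m) && (blank \notin m).

Definition msg_length (S : finType) (m : seq S) : nat := (size m).-1.

Definition valid_input (S : finType) (blank : S) (C : CAS4 S)
  (iota : cell -> seq S) : Prop :=
  forall c, c \in cas_A C -> is_message blank (iota c).

(* Configurations C_{t,iota} (blank initialization).  Cells outside L are
   given the value blank (they are never used, by locality of f). *)
Fixpoint config (S : finType) (blank : S) (C : CAS4 S) (iota : cell -> seq S)
  (t : nat) (c : cell) {struct t} : S :=
  match t with
  | 0 => if c \in cas_A C then nth blank (iota c) 0 else blank
  | t'.+1 =>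
      if c \in cas_A C then
        (if t' < msg_length (iota c) then nth blank (iota c) t'.+1 else blank)
      else if c \in cas_L C then
        cas_f C c [ffun i => config blank C iota t' (cadd c (n4 i))] t'.+1
      else blank
  end.

Definition is_channel (S : finType) (blank : S) (C : CAS4 S) (x y : cell)
  (delta : int) : Prop :=
  forall iota, valid_input blank C iota -> forall t : nat,
    if (delta <= t%:Z)%R
    then config blank C iota t y = config blank C iota (absz (t%:Z - delta)%R) x
    else config blank C iota t y = blank.

Definition nbr (c d : cell) : bool := has (fun n => cadd c n == d) N4.

Definition connected (L : seq cell) : Prop :=
  forall c d, c \in L -> d \in L ->
    exists p : seq cell, [/\ all (mem L) p, path nbr c p & last c p = d].

(* ---- External boundary ----
   A closed edge path is given by its cyclic list of vertices vs = [w_0;...;w_{k-1}];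
   edge e_i joins w_i and w_{(i+1) mod k} (so e_i and e_{i+1} meet at
   w_{i+1}). *)
Definition bvert (vs : seq cell) (i : nat) : cell := nth (0%R, 0%R) vs i.
Definition bnext (vs : seq cell) (i : nat) : cell :=
  nth (0%R, 0%R) vs (i.+1 %% size vs).

Definition unit_seg (p q : cell) : bool :=
  ((p.1 == q.1) && (absz (p.2 - q.2)%R == 1)) ||
  ((p.2 == q.2) && (absz (p.1 - q.1)%R == 1)).

Definition edge_cells (p q : cell) : cell * cell :=
  if p.2 == q.2 then
    let x := Order.min p.1 q.1 in ((x, p.2), (x, (p.2 - 1)%R))
  else
    let y := Order.min p.2 q.2 in ((p.1, y), ((p.1 - 1)%R, y)).

Definition bedge (vs : seq cell) (i : nat) : cell * cell :=
  edge_cells (bvert vs i) (bnext vs i).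

Definition bar (L vs : seq cell) (i : nat) : cell :=
  if (bedge vs i).1 \in L then (bedge vs i).1 else (bedge vs i).2.

(* Inside of the closed curve: the horizontal ray from the centre
   (i+1/2, j+1/2) of cell c = (i,j) to the right crosses the curve an odd
   number of times; it crosses exactly the vertical edges at abscissa
   >= i+1 spanning [j, j+1]. *)
Definition crosses_ray (c p q : cell) : bool :=
  [&& p.1 == q.1, (c.1 + 1 <= p.1)%R & Order.min p.2 q.2 == c.2].

Definition ray_crossings (vs : seq cell) (c : cell) : nat :=
  count (fun i => crosses_ray c (bvert vs i) (bnext vs i)) (iota 0 (size vs)).

Definition inside (vs : seq cell) (c : cell) : bool := odd (ray_crossings vs c).

Definition is_ext_boundary (L vs : seq cell) : Prop :=
  [/\ 3 <= size vs,
      uniq vs,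
      forall i, i < size vs -> unit_seg (bvert vs i) (bnext vs i),
      forall i, i < size vs -> ((bedge vs i).1 \in L) != ((bedge vs i).2 \in L)
    & forall c, c \in L -> inside vs c].

Definition cyc_perm4 (w x y z p q r s : cell) : Prop :=
  [\/ (w, x, y, z) = (p, q, r, s), (w, x, y, z) = (q, r, s, p),
      (w, x, y, z) = (r, s, p, q) | (w, x, y, z) = (s, p, q, r)].

Definition crossing_cond (L vs : seq cell) (a1 a2 b1 b2 : cell) : Prop :=
  let k := size vs in
  (forall i j, i <= j -> j < k -> bar L vs i = bar L vs j ->
     bar L vs i \in [:: a1; a2; b1; b2] ->
     (forall l, i <= l <= j -> bar L vs l = bar L vs i) \/
     (forall l, l < k -> (l <= i) || (j <= l) -> bar L vs l = bar L vs i)) /\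
  (exists al be ga de, [/\ al < be, be < ga, ga < de & de < k] /\
     (cyc_perm4 (bar L vs al) (bar L vs be) (bar L vs ga) (bar L vs de)
                a1 a2 b1 b2 \/
      cyc_perm4 (bar L vs al) (bar L vs be) (bar L vs ga) (bar L vs de)
                b2 b1 a2 a1)).

Definition crosses (S : finType) (blank : S) (C : CAS4 S)
  (a1 a2 b1 b2 : cell) : Prop :=
  [/\ uniq [:: a1; a2; b1; b2],
      [/\ a1 \in cas_A C, a2 \in cas_A C, b1 \in cas_L C & b2 \in cas_L C],
      (exists d1, is_channel blank C a1 b1 d1),
      (exists d2, is_channel blank C a2 b2 d2)
    & connected (cas_L C) /\
      exists vs, is_ext_boundary (cas_L C) vs /\
                 crossing_cond (cas_L C) vs a1 a2 b1 b2].

(* Main.v *)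
Require Import Defs.
From HB Require Import structures.
From mathcomp Require Import all_boot all_order all_algebra.
Set Implicit Arguments. Unset Strict Implicit. Unset Printing Implicit Defensive.

Definition Lc : seq cell := [:: ((-2)%Z, (0)%Z); ((-1)%Z, (0)%Z); ((-1)%Z, (1)%Z); ((0)%Z, (0)%Z); ((1)%Z, (0)%Z); ((0)%Z, (1)%Z); ((1)%Z, (1)%Z); ((2)%Z, (0)%Z); ((2)%Z, (1)%Z); ((3)%Z, (0)%Z); ((3)%Z, (1)%Z); ((0)%Z, (-2)%Z); ((0)%Z, (-1)%Z); ((1)%Z, (-1)%Z); ((0)%Z, (2)%Z); ((1)%Z, (2)%Z); ((0)%Z, (3)%Z); ((1)%Z, (3)%Z)].
Definition a1 : cell := ((-2)%Z, (0)%Z).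
Definition a2 : cell := ((0)%Z, (-2)%Z).
Definition b1 : cell := ((3)%Z, (1)%Z).
Definition b2 : cell := ((1)%Z, (3)%Z).
Definition W0 : cell := ((-1)%Z, (0)%Z).
Definition W1 : cell := ((-1)%Z, (1)%Z).
Definition P00 : cell := ((0)%Z, (0)%Z).
Definition P10 : cell := ((1)%Z, (0)%Z).
Definition P01 : cell := ((0)%Z, (1)%Z).
Definition P11 : cell := ((1)%Z, (1)%Z).
Definition E0 : cell := ((2)%Z, (0)%Z).
Definition E1 : cell := ((2)%Z, (1)%Z).
Definition F : cell := ((3)%Z, (0)%Z).
Definition S0 : cell := ((0)%Z, (-1)%Z).
Definition S1 : cell := ((1)%Z, (-1)%Z).
Definition N0 : cell := ((0)%Z, (2)%Z).
Definition N1 : cell := ((1)%Z, (2)%Z).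
Definition G : cell := ((0)%Z, (3)%Z).
Definition tab : seq (cell * (nat * nat)) := [:: (((-1)%Z, (0)%Z), (0, 0)); (((-1)%Z, (1)%Z), (4, 1)); (((0)%Z, (0)%Z), (0, 1)); (((1)%Z, (0)%Z), (1, 0)); (((0)%Z, (1)%Z), (1, 0)); (((1)%Z, (1)%Z), (0, 1)); (((2)%Z, (0)%Z), (0, 4)); (((2)%Z, (1)%Z), (4, 0)); (((3)%Z, (0)%Z), (4, 0)); (((3)%Z, (1)%Z), (0, 1)); (((0)%Z, (-1)%Z), (1, 1)); (((1)%Z, (-1)%Z), (0, 4)); (((0)%Z, (2)%Z), (4, 1)); (((1)%Z, (2)%Z), (1, 4)); (((0)%Z, (3)%Z), (1, 4)); (((1)%Z, (3)%Z), (0, 1))].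
Definition vs : seq cell := [:: ((-2)%Z, (0)%Z); ((-1)%Z, (0)%Z); ((0)%Z, (0)%Z); ((0)%Z, (-1)%Z); ((0)%Z, (-2)%Z); ((1)%Z, (-2)%Z); ((1)%Z, (-1)%Z); ((2)%Z, (-1)%Z); ((2)%Z, (0)%Z); ((3)%Z, (0)%Z); ((4)%Z, (0)%Z); ((4)%Z, (1)%Z); ((4)%Z, (2)%Z); ((3)%Z, (2)%Z); ((2)%Z, (2)%Z); ((2)%Z, (3)%Z); ((2)%Z, (4)%Z); ((1)%Z, (4)%Z); ((0)%Z, (4)%Z); ((0)%Z, (3)%Z); ((0)%Z, (2)%Z); ((-1)%Z, (2)%Z); ((-1)%Z, (1)%Z); ((-2)%Z, (1)%Z)].
Definition toht : seq (cell * seq cell) := [:: (((-2)%Z, (0)%Z), [:: ((-1)%Z, (0)%Z); ((0)%Z, (0)%Z)]); (((-1)%Z, (0)%Z), [:: ((0)%Z, (0)%Z)]); (((-1)%Z, (1)%Z), [:: ((-1)%Z, (0)%Z); ((0)%Z, (0)%Z)]); (((0)%Z, (0)%Z), [:: ]); (((1)%Z, (0)%Z), [:: ((0)%Z, (0)%Z)]); (((0)%Z, (1)%Z), [:: ((0)%Z, (0)%Z)]); (((1)%Z, (1)%Z), [:: ((1)%Z, (0)%Z); ((0)%Z, (0)%Z)]); (((2)%Z, (0)%Z), [:: ((1)%Z, (0)%Z); ((0)%Z, (0)%Z)]); (((2)%Z, (1)%Z), [:: ((2)%Z, (0)%Z); ((1)%Z, (0)%Z); ((0)%Z, (0)%Z)]);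 (((3)%Z, (0)%Z), [:: ((2)%Z, (0)%Z); ((1)%Z, (0)%Z); ((0)%Z, (0)%Z)]); (((3)%Z, (1)%Z), [:: ((3)%Z, (0)%Z); ((2)%Z, (0)%Z); ((1)%Z, (0)%Z); ((0)%Z, (0)%Z)]); (((0)%Z, (-2)%Z), [:: ((0)%Z, (-1)%Z); ((0)%Z, (0)%Z)]); (((0)%Z, (-1)%Z), [:: ((0)%Z, (0)%Z)]); (((1)%Z, (-1)%Z), [:: ((0)%Z, (-1)%Z); ((0)%Z, (0)%Z)]); (((0)%Z, (2)%Z), [:: ((0)%Z, (1)%Z); ((0)%Z, (0)%Z)]); (((1)%Z, (2)%Z), [:: ((1)%Z, (1)%Z); ((1)%Z, (0)%Z); ((0)%Z, (0)%Z)]); (((0)%Z, (3)%Z), [:: ((0)%Z, (2)%Z); ((0)%Z, (1)%Z); ((0)%Z, (0)%Z)]); (((1)%Z, (3)%Z), [:: ((1)%Z, (2)%Z); ((1)%Z, (1)%Z); ((1)%Z, (0)%Z); ((0)%Z, (0)%Z)])].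
Definition fromt : seq (cell * seq cell) := [:: (((-2)%Z, (0)%Z), [:: ((-1)%Z, (0)%Z); ((-2)%Z, (0)%Z)]); (((-1)%Z, (0)%Z), [:: ((-1)%Z, (0)%Z)]); (((-1)%Z, (1)%Z), [:: ((-1)%Z, (0)%Z); ((-1)%Z, (1)%Z)]); (((0)%Z, (0)%Z), [:: ]); (((1)%Z, (0)%Z), [:: ((1)%Z, (0)%Z)]); (((0)%Z, (1)%Z), [:: ((0)%Z, (1)%Z)]); (((1)%Z, (1)%Z), [:: ((1)%Z, (0)%Z); ((1)%Z, (1)%Z)]); (((2)%Z, (0)%Z), [:: ((1)%Z, (0)%Z); ((2)%Z, (0)%Z)]); (((2)%Z, (1)%Z), [:: ((1)%Z, (0)%Z); ((2)%Z, (0)%Z); ((2)%Z, (1)%Z)]); (((3)%Z, (0)%Z), [:: ((1)%Z, (0)%Z); ((2)%Z, (0)%Z); ((3)%Z, (0)%Z)]); (((3)%Z, (1)%Z), [:: ((1)%Z, (0)%Z); ((2)%Z, (0)%Z); ((3)%Z, (0)%Z); ((3)%Z, (1)%Z)]); (((0)%Z, (-2)%Z), [:: ((0)%Z, (-1)%Z); ((0)%Z, (-2)%Z)]); (((0)%Z, (-1)%Z), [:: ((0)%Z, (-1)%Z)]); (((1)%Z, (-1)%Z), [:: ((0)%Z, (-1)%Z); ((1)%Z, (-1)%Z)]); (((0)%Z, (2)%Z), [:: ((0)%Z, (1)%Z); ((0)%Z, (2)%Z)]); (((1)%Z, (2)%Z), [:: ((1)%Z, (0)%Z); ((1)%Z,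 (1)%Z); ((1)%Z, (2)%Z)]); (((0)%Z, (3)%Z), [:: ((0)%Z, (1)%Z); ((0)%Z, (2)%Z); ((0)%Z, (3)%Z)]); (((1)%Z, (3)%Z), [:: ((1)%Z, (0)%Z); ((1)%Z, (1)%Z); ((1)%Z, (2)%Z); ((1)%Z, (3)%Z)])].
Definition Ac : seq cell := [:: a1; a2].

Fixpoint look (s : seq (cell * (nat * nat))) (c : cell) : nat * nat :=
  match s with [::] => (4, 4) | (d, p) :: s' => if d == c then p else look s' c end.

Definition ordd (k : nat) : 'I_5 :=
  match k with
  | 0 => @Ordinal 5 0 isT | 1 => @Ordinal 5 1 isT | 2 => @Ordinal 5 2 isT
  | 3 => @Ordinal 5 3 isT | _ => @Ordinal 5 4 isT end.

Definition seld (c : cell) (b : bool) : 'I_5 :=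
  ordd (if b then (look tab c).2 else (look tab c).1).
Definition sel (c : cell) (t : nat) : 'I_5 := seld c (odd t).
Definition nbf (c : cell) (b : bool) : cell := cadd c (n4 (seld c b)).

Lemma sel_ok : all (fun c => (c \in Ac) || ((nbf c true \in Lc) && (nbf c false \in Lc))) Lc.
Proof. by vm_compute. Qed.

Lemma Asub : {subset Ac <= Lc}.
Proof. by move=> x; rewrite !inE => /orP[] /eqP ->; vm_compute. Qed.

Definition fC (S : finType) (c : cell) (x : {ffun 'I_5 -> S}) (t : nat) : S := x (sel c t).

Lemma fC_local (S : finType) c : c \in Lc -> c \notin Ac ->
    forall i : 'I_5, cadd c (n4 i) \notin Lc ->
    forall x y : {ffun 'I_5 -> S}, (forall j, j != i -> x j = y j) ->
    forall t, fC c x t = fC c y t.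
Proof.
move=> cL cA i hi x y hxy t; rewrite /fC; apply: hxy; apply/eqP => E.
have := allP sel_ok c cL; rewrite (negbTE cA) /= => /andP[h1 h2].
move: hi; rewrite -E /sel /nbf in h1 h2 *.
by case: (odd t); rewrite ?h1 ?h2.
Qed.

Definition C (S : finType) : CAS4 S :=
  {| cas_L := Lc; cas_A := Ac; cas_A_sub := Asub; cas_f := @fC S;
     cas_f_local := @fC_local S |}.

Section Conf.
Variables (S : finType) (blank : S) (iota : cell -> seq S).

Lemma stepE s c : c \in Lc -> c \notin Ac ->
  config blank (C S) iota s.+1 c = config blank (C S) iota s (nbf c (odd s.+1)).
Proof. by move=> cL cA /=; rewrite (negbTE cA) cL /fC ffunE. Qed.

Lemma conf0 c : c \notin Ac -> config blank (C S) iota 0 c = blank.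
Proof. by move=> cA /=; rewrite (negbTE cA). Qed.

Definition XX (a : cell) (t k : nat) : S :=
  if k <= t then config blank (C S) iota (t - k) a else blank.

Lemma XXS a t k : XX a t.+1 k.+1 = XX a t k.
Proof. by rewrite /XX ltnS subSS. Qed.
Lemma XX0 a t : XX a t 0 = config blank (C S) iota t a.
Proof. by rewrite /XX subn0. Qed.
Lemma XXz a k : XX a 0 k.+1 = blank.
Proof. by []. Qed.
End Conf.

Lemma W0_a S blank iota t : config blank (C S) iota t W0 = XX blank iota a1 t 1.
Proof.
case: t => [|s]; first by rewrite conf0 ?XXz //; vm_compute.
rewrite stepE; try by vm_compute.
have -> : nbf W0 (odd s.+1) = a1 by case: (odd s.+1); vm_compute.
by rewrite XXS XX0.
Qed.

Lemma W1_o S blank iota t : odd t = true -> config blank (C S) iota t W1 = XX blank iota a1 t 2.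
Proof.
case: t => [|s] // Ht.
rewrite stepE; try by vm_compute.
rewrite Ht (_ : nbf W1 true = W0); last by vm_compute.
rewrite XXS; apply: W0_a; by move: Ht => /=; case: (odd s).
Qed.

Lemma W1_e S blank iota t : odd t = false -> config blank (C S) iota t W1 = XX blank iota a1 t 3.
Proof.
case: t => [|s] Ht; first by rewrite conf0 ?XXz //; vm_compute.
rewrite stepE; try by vm_compute.
rewrite Ht (_ : nbf W1 false = W1); last by vm_compute.
rewrite XXS; apply: W1_o; by move: Ht => /=; case: (odd s).
Qed.

Lemma P00_e S blank iota t : odd t = false -> config blank (C S) iota t P00 = XX blank iota a1 t 2.
Proof.
case: t => [|s] Ht; first by rewrite conf0 ?XXz //; vm_compute.
rewrite stepE; try by vm_compute.
rewrite Ht (_ : nbf P00 false = W0); last by vm_compute.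
rewrite XXS; apply: W0_a; by move: Ht => /=; case: (odd s).
Qed.

Lemma P01_o S blank iota t : odd t = true -> config blank (C S) iota t P01 = XX blank iota a1 t 4.
Proof.
case: t => [|s] // Ht.
rewrite stepE; try by vm_compute.
rewrite Ht (_ : nbf P01 true = W1); last by vm_compute.
rewrite XXS; apply: W1_e; by move: Ht => /=; case: (odd s).
Qed.

Lemma P10_o S blank iota t : odd t = true -> config blank (C S) iota t P10 = XX blank iota a1 t 3.
Proof.
case: t => [|s] // Ht.
rewrite stepE; try by vm_compute.
rewrite Ht (_ : nbf P10 true = P00); last by vm_compute.
rewrite XXS; apply: P00_e; by move: Ht => /=; case: (odd s).
Qed.

Lemma P11_e S blank iota t : odd t = false -> config blank (C S) iota t P11 = XX blank iota a1 t 5.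
Proof.
case: t => [|s] Ht; first by rewrite conf0 ?XXz //; vm_compute.
rewrite stepE; try by vm_compute.
rewrite Ht (_ : nbf P11 false = P01); last by vm_compute.
rewrite XXS; apply: P01_o; by move: Ht => /=; case: (odd s).
Qed.

Lemma E0_e S blank iota t : odd t = false -> config blank (C S) iota t E0 = XX blank iota a1 t 4.
Proof.
case: t => [|s] Ht; first by rewrite conf0 ?XXz //; vm_compute.
rewrite stepE; try by vm_compute.
rewrite Ht (_ : nbf E0 false = P10); last by vm_compute.
rewrite XXS; apply: P10_o; by move: Ht => /=; case: (odd s).
Qed.

Lemma E0_o S blank iota t : odd t = true -> config blank (C S) iota t E0 = XX blank iota a1 t 5.
Proof.
case: t => [|s] // Ht.
rewrite stepE; try by vm_compute.
rewrite Ht (_ : nbf E0 true = E0); last by vm_compute.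
rewrite XXS; apply: E0_e; by move: Ht => /=; case: (odd s).
Qed.

Lemma E1_o S blank iota t : odd t = true -> config blank (C S) iota t E1 = XX blank iota a1 t 6.
Proof.
case: t => [|s] // Ht.
rewrite stepE; try by vm_compute.
rewrite Ht (_ : nbf E1 true = P11); last by vm_compute.
rewrite XXS; apply: P11_e; by move: Ht => /=; case: (odd s).
Qed.

Lemma F_o S blank iota t : odd t = true -> config blank (C S) iota t F = XX blank iota a1 t 5.
Proof.
case: t => [|s] // Ht.
rewrite stepE; try by vm_compute.
rewrite Ht (_ : nbf F true = E0); last by vm_compute.
rewrite XXS; apply: E0_e; by move: Ht => /=; case: (odd s).
Qed.

Lemma F_e S blank iota t : odd t = false -> config blank (C S) iota t F = XX blank iota a1 t 6.
Proof.
case: t => [|s] Ht; first by rewrite conf0 ?XXz //; vm_compute.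
rewrite stepE; try by vm_compute.
rewrite Ht (_ : nbf F false = F); last by vm_compute.
rewrite XXS; apply: F_o; by move: Ht => /=; case: (odd s).
Qed.

Lemma b1_o S blank iota t : odd t = true -> config blank (C S) iota t b1 = XX blank iota a1 t 7.
Proof.
case: t => [|s] // Ht.
rewrite stepE; try by vm_compute.
rewrite Ht (_ : nbf b1 true = F); last by vm_compute.
rewrite XXS; apply: F_e; by move: Ht => /=; case: (odd s).
Qed.

Lemma b1_e S blank iota t : odd t = false -> config blank (C S) iota t b1 = XX blank iota a1 t 7.
Proof.
case: t => [|s] Ht; first by rewrite conf0 ?XXz //; vm_compute.
rewrite stepE; try by vm_compute.
rewrite Ht (_ : nbf b1 false = E1); last by vm_compute.
rewrite XXS; apply: E1_o; by move: Ht => /=; case: (odd s).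
Qed.

Lemma S0_a S blank iota t : config blank (C S) iota t S0 = XX blank iota a2 t 1.
Proof.
case: t => [|s]; first by rewrite conf0 ?XXz //; vm_compute.
rewrite stepE; try by vm_compute.
have -> : nbf S0 (odd s.+1) = a2 by case: (odd s.+1); vm_compute.
by rewrite XXS XX0.
Qed.

Lemma S1_e S blank iota t : odd t = false -> config blank (C S) iota t S1 = XX blank iota a2 t 2.
Proof.
case: t => [|s] Ht; first by rewrite conf0 ?XXz //; vm_compute.
rewrite stepE; try by vm_compute.
rewrite Ht (_ : nbf S1 false = S0); last by vm_compute.
rewrite XXS; apply: S0_a; by move: Ht => /=; case: (odd s).
Qed.

Lemma S1_o S blank iota t : odd t = true -> config blank (C S) iota t S1 = XX blank iota a2 t 3.
Proof.
case: t => [|s] // Ht.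
rewrite stepE; try by vm_compute.
rewrite Ht (_ : nbf S1 true = S1); last by vm_compute.
rewrite XXS; apply: S1_e; by move: Ht => /=; case: (odd s).
Qed.

Lemma P00_o S blank iota t : odd t = true -> config blank (C S) iota t P00 = XX blank iota a2 t 2.
Proof.
case: t => [|s] // Ht.
rewrite stepE; try by vm_compute.
rewrite Ht (_ : nbf P00 true = S0); last by vm_compute.
rewrite XXS; apply: S0_a; by move: Ht => /=; case: (odd s).
Qed.

Lemma P10_e S blank iota t : odd t = false -> config blank (C S) iota t P10 = XX blank iota a2 t 4.
Proof.
case: t => [|s] Ht; first by rewrite conf0 ?XXz //; vm_compute.
rewrite stepE; try by vm_compute.
rewrite Ht (_ : nbf P10 false = S1); last by vm_compute.
rewrite XXS; apply: S1_o; by move: Ht => /=; case: (odd s).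
Qed.

Lemma P01_e S blank iota t : odd t = false -> config blank (C S) iota t P01 = XX blank iota a2 t 3.
Proof.
case: t => [|s] Ht; first by rewrite conf0 ?XXz //; vm_compute.
rewrite stepE; try by vm_compute.
rewrite Ht (_ : nbf P01 false = P00); last by vm_compute.
rewrite XXS; apply: P00_o; by move: Ht => /=; case: (odd s).
Qed.

Lemma P11_o S blank iota t : odd t = true -> config blank (C S) iota t P11 = XX blank iota a2 t 5.
Proof.
case: t => [|s] // Ht.
rewrite stepE; try by vm_compute.
rewrite Ht (_ : nbf P11 true = P10); last by vm_compute.
rewrite XXS; apply: P10_e; by move: Ht => /=; case: (odd s).
Qed.

Lemma N0_o S blank iota t : odd t = true -> config blank (C S) iota t N0 = XX blank iota a2 t 4.
Proof.
case: t => [|s] // Ht.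
rewrite stepE; try by vm_compute.
rewrite Ht (_ : nbf N0 true = P01); last by vm_compute.
rewrite XXS; apply: P01_e; by move: Ht => /=; case: (odd s).
Qed.

Lemma N1_e S blank iota t : odd t = false -> config blank (C S) iota t N1 = XX blank iota a2 t 6.
Proof.
case: t => [|s] Ht; first by rewrite conf0 ?XXz //; vm_compute.
rewrite stepE; try by vm_compute.
rewrite Ht (_ : nbf N1 false = P11); last by vm_compute.
rewrite XXS; apply: P11_o; by move: Ht => /=; case: (odd s).
Qed.

Lemma G_e S blank iota t : odd t = false -> config blank (C S) iota t G = XX blank iota a2 t 5.
Proof.
case: t => [|s] Ht; first by rewrite conf0 ?XXz //; vm_compute.
rewrite stepE; try by vm_compute.
rewrite Ht (_ : nbf G false = N0); last by vm_compute.
rewrite XXS; apply: N0_o; by move: Ht => /=; case: (odd s).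
Qed.

Lemma G_o S blank iota t : odd t = true -> config blank (C S) iota t G = XX blank iota a2 t 6.
Proof.
case: t => [|s] // Ht.
rewrite stepE; try by vm_compute.
rewrite Ht (_ : nbf G true = G); last by vm_compute.
rewrite XXS; apply: G_e; by move: Ht => /=; case: (odd s).
Qed.

Lemma b2_o S blank iota t : odd t = true -> config blank (C S) iota t b2 = XX blank iota a2 t 7.
Proof.
case: t => [|s] // Ht.
rewrite stepE; try by vm_compute.
rewrite Ht (_ : nbf b2 true = N1); last by vm_compute.
rewrite XXS; apply: N1_e; by move: Ht => /=; case: (odd s).
Qed.

Lemma b2_e S blank iota t : odd t = false -> config blank (C S) iota t b2 = XX blank iota a2 t 7.
Proof.
case: t => [|s] Ht; first by rewrite conf0 ?XXz //; vm_compute.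
rewrite stepE; try by vm_compute.
rewrite Ht (_ : nbf b2 false = G); last by vm_compute.
rewrite XXS; apply: G_o; by move: Ht => /=; case: (odd s).
Qed.

Lemma b1_all S blank iota t : config blank (C S) iota t b1 = XX blank iota a1 t 7.
Proof. case Ht: (odd t); [exact: b1_o | exact: b1_e]. Qed.
Lemma b2_all S blank iota t : config blank (C S) iota t b2 = XX blank iota a2 t 7.
Proof. case Ht: (odd t); [exact: b2_o | exact: b2_e]. Qed.

Lemma chan_gen S blank (a b : cell) :
  (forall iota t, config blank (C S) iota t b = XX blank iota a t 7) ->
  is_channel blank (C S) a b (Posz 7).
Proof.
move=> H iota _ t; rewrite H /XX lez_nat.
case: (leqP 7 t) => // h.
by rewrite subzn.
Qed.

Fixpoint lookp (s : seq (cell * seq cell)) (c : cell) : seq cell :=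
  match s with [::] => [::] | (d, p) :: s' => if d == c then p else lookp s' c end.

Definition hub : cell := P00.

Lemma conn_ok1 : all (fun c => [&& all (mem Lc) (lookp toht c), path nbr c (lookp toht c) &
   last c (lookp toht c) == hub]) Lc.
Proof. by vm_compute. Qed.
Lemma conn_ok2 : all (fun c => [&& all (mem Lc) (lookp fromt c), path nbr hub (lookp fromt c)
   & last hub (lookp fromt c) == c]) Lc.
Proof. by vm_compute. Qed.

Lemma conn : connected Lc.
Proof.
move=> c d cL dL.
have /and3P[h1 h2 /eqP h3] := allP conn_ok1 c cL.
have /and3P[h4 h5 /eqP h6] := allP conn_ok2 d dL.
exists (lookp toht c ++ lookp fromt d).
by rewrite all_cat cat_path last_cat h1 h2 h3 h4 h5 h6.
Qed.

Lemma bnd_ok : [&& 3 <= size vs, uniq vs,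
  all (fun i => unit_seg (bvert vs i) (bnext vs i)) (iota 0 (size vs)),
  all (fun i => ((bedge vs i).1 \in Lc) != ((bedge vs i).2 \in Lc)) (iota 0 (size vs))
  & all (inside vs) Lc].
Proof. by vm_compute. Qed.

Lemma bnd : is_ext_boundary Lc vs.
Proof.
have /and5P[h1 h2 h3 h4 h5] := bnd_ok.
split => //.
- by move=> i hi; apply: (allP h3); rewrite mem_iota.
- by move=> i hi; apply: (allP h4); rewrite mem_iota.
- by move=> c cL; apply: (allP h5).
Qed.

Definition k := size vs.
Definition sp := [:: a1; a2; b1; b2].

Lemma ii_ok : all (fun i => all (fun j =>
   ((i <= j) && (bar Lc vs i == bar Lc vs j) && (bar Lc vs i \in sp)) ==>
   (all (fun l => bar Lc vs l == bar Lc vs i) (index_iota i j.+1) ||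
    all (fun l => ((l <= i) || (j <= l)) ==> (bar Lc vs l == bar Lc vs i)) (iota 0 k)))
   (iota 0 k)) (iota 0 k).
Proof. by vm_compute. Qed.

Lemma cross_ok : crossing_cond Lc vs a1 a2 b1 b2.
Proof.
split.
- move=> i j hij hj E hs.
  have hi : i < k by apply: leq_ltn_trans hj.
  have mi : i \in iota 0 k by rewrite mem_iota.
  have mj : j \in iota 0 k by rewrite mem_iota.
  have := allP (allP ii_ok i mi) j mj.
  rewrite hij -E eqxx hs implyTb => /orP[] H.
  + left => l /andP[l1 l2]; apply/eqP; apply: (allP H).
    by rewrite mem_index_iota l1 ltnS.
  + right => l hl hl2; apply/eqP.
    have ml : l \in iota 0 k by rewrite mem_iota.
    by move: (allP H l ml); rewrite hl2.
- exists 0, 3, 11, 15; split => //; left; apply: Or41; by vm_compute.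
Qed.

Theorem theorem1 (S : finType) (blank : S) :
  exists (C : CAS4 S) (a1 a2 b1 b2 : cell) (d1 d2 : int),
    [/\ uniq [:: a1; a2; b1; b2],
        [/\ a1 \in cas_A C, a2 \in cas_A C, b1 \in cas_L C & b2 \in cas_L C],
        is_channel blank C a1 b1 d1,
        is_channel blank C a2 b2 d2
      & crosses blank C a1 a2 b1 b2].
Proof.
have ch1 : is_channel blank (C S) a1 b1 (Posz 7) by apply: chan_gen => iota t; apply: b1_all.
have ch2 : is_channel blank (C S) a2 b2 (Posz 7) by apply: chan_gen => iota t; apply: b2_all.
have hu : uniq [:: a1; a2; b1; b2] by vm_compute.
have hm : [/\ a1 \in cas_A (C S), a2 \in cas_A (C S), b1 \in cas_L (C S) & b2 \in cas_L (C S)].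
  by split; vm_compute.
exists (C S), a1, a2, b1, b2, (Posz 7), (Posz 7); split => //.
split => //; [by exists (Posz 7) | by exists (Posz 7) |].
split; first exact: conn.
by exists vs; split; [exact: bnd | exact: cross_ok].
Qed.
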